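(* Fix a cooperative Markov game and a stationary joint policy $\pi$ as described in the context. Let $f:(\mathbf S\times\mathbf A)^*\to\{0,1\}$ be an arbitrary function. Communication availability at time $t$ is $\lambda_t=f(\mathbf s_0\mathbf a_0\cdots\mathbf s_{t-1}\mathbf a_{t-1})$, with $\lambda_0=f(\varepsilon)$ for the empty string $\varepsilon$. Let $\Gamma^{img}_f$ be the distribution over joint paths induced by imaginary play (Algorithm 1) whose loss time is the random time $t_{loss}=\min\{t:\lambda_t=0\}$, with $t_{loss}=\infty$ if no such $t$ exists. Then $$KL\big(\Gamma^{full}\,\|\,\Gamma^{img}_{0}\big)\ge KL\big(\Gamma^{full}\,\|\,\Gamma^{img}_{f}\big).$$
   Context: Multiagent model: there are $N$ agents. Agent $i$ is modeled by a finite MDP $\mathcal{M}^i=(\mathcal{S}^i,s_I^i,\mathcal{A}^i,\mathcal{T}^i)$. Here $\mathcal{S}^i$ is a finite state set, $s_I^i\in\mathcal{S}^i$ is the initial state, $\mathcal{A}^i$ is a finite action set, and $\mathcal{T}^i:\mathcal{S}^i\times\mathcal{A}^i\to\Delta(\mathcal{S}^i)$ is the transition kernel. The cooperative Markov game has joint state set $\mathbf{S}=\prod_i\mathcal{S}^i$, joint initial state $\mathbf{s}_I=(s_I^1,\dots,s_I^N)$, and joint action set $\mathbf{A}=\prod_i\mathcal{A}^i$. Its transition kernel is $\mathbf{T}(\mathbf{s},\mathbf{a},\mathbf{y})=\prod_{i}\mathcal{T}^i(s^i,a^i,y^i)$. A stationary joint policy is a map $\pi:\mathbf{S}\to\Delta(\mathbf{A})$.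 A joint path is an infinite sequence $\mathbf{s}_0\mathbf{a}_0\mathbf{s}_1\mathbf{a}_1\cdots\in(\mathbf{S}\times\mathbf{A})^\omega$ with $\mathbf{s}_0=\mathbf{s}_I$. All random sampling below is mutually independent given the stated conditioning. Full-communication execution: at each time $t$, $\mathbf{a}_t\sim\pi(\mathbf{s}_t)$ is drawn once for the whole team. Each agent $i$ then moves to $s^i_{t+1}\sim\mathcal{T}^i(s^i_t,a^i_t)$. $\Gamma^{full}$ denotes the resulting distribution over joint paths. Imaginary play with loss time $t_{loss}\in\{0,1,\dots\}\cup\{\infty\}$ (Algorithm 1): - For $t<t_{loss}$, the team acts exactly as under full communication. Each agent $i$ records $\hat s^j_{t,i}=s^j_t$ for all $j\ne i$, and records $\hat{\mathbf a}_{t,i}=\mathbf a_t$. - For $t\ge t_{loss}$, each agent $i$ acts separately and does not observe the others. First it sets its imaginary teammate states. If $t=0$, it sets $\hat s^j_{0,i}=s_I^j$ for $j\neq i$. Otherwise it samples $\hat s^j_{t,i}\sim\mathcal{T}^j(\hat s^j_{t-1,i},\hat a^j_{t-1,i})$ for $j\ne i$, where $\hat a^j_{t-1,i}$ is the $j$-th component of $\hat{\mathbf a}_{t-1,i}$. - Agent $i$ then samples its own joint action $\hat{\mathbf a}_{t,i}\sim\pi(\hat s^1_{t,i},\dots,\hat s^{i-1}_{t,i},s^i_t,\hat s^{i+1}_{t,i},\dots,\hat s^N_{t,i})$. - Agent $i$ executes only its own component $\hat a^i_{t,i}$, and moves to $s^i_{t+1}\sim\mathcal{T}^i(s^i_t,\hat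 a^i_{t,i})$. - The realized joint action at time $t$ is $\mathbf a_t=(\hat a^1_{t,1},\dots,\hat a^N_{t,N})$. $\Gamma^{img}_{t_{loss}}$ denotes the induced distribution over realized joint paths. Once communication is lost in Algorithm 1, it is never used again. $KL$ is Kullback–Leibler divergence. *)

(* Defs.v *)
From HB Require Import structures.
From mathcomp Require Import all_boot all_order all_algebra.
From mathcomp Require Import all_classical all_reals.
From mathcomp Require Import ereal exp.
Set Implicit Arguments. Unset Strict Implicit. Unset Printing Implicit Defensive.
Import Order.TTheory GRing.Theory Num.Theory.
Local Open Scope ring_scope.

Section MarkovGame.
Variables (R : realType) (N : nat) (S A : 'I_N -> finType).

Definition JS := {dffun forall i : 'I_N, S i}.
Definition JA := {dffun forall i : 'I_N, A i}.

Variables (sI : JS) (T : forall i : 'I_N, S i -> A i -> S i -> R) (pi : JS -> JA -> R).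

Definition is_dist (X : finType) (p : X -> R) := (forall x, 0 <= p x) /\ \sum_x p x = 1.

Definition JT (s : JS) (a : JA) (y : JS) : R := \prod_i T (s i) (a i) (y i).

Definition ind (b : bool) : R := if b then 1 else 0.

(* probability of a finite prefix s_0 a_0 ... s_{n-1} a_{n-1} under full communication
   (d is the default element used by nth; it is h's first element) *)
Definition full_prob_d (d : JS * JA) (h : seq (JS * JA)) : R :=
  let s t := (nth d h t).1 in let a t := (nth d h t).2 in
  ind (s 0%N == sI) * (\prod_(t < size h) pi (s t) (a t))
  * \prod_(t < (size h).-1) JT (s t) (a t) (s t.+1).

Definition full_prob (h : seq (JS * JA)) : R :=
  if h is d :: _ then full_prob_d d h else 1.

(* probability of a finite prefix of length n under imaginary play with loss time L < n.
   Agent i's hidden variables for times L+k (k < n-L): its imaginary joint state hs_k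
   (whose own component is forced to equal its true state) and its sampled joint action
   ha_k (whose own component is the realized action a^i_{L+k}). *)
Definition img_prob_d (d : JS * JA) (L : nat) (h : seq (JS * JA)) : R :=
  let n := size h in
  let s t := (nth d h t).1 in let a t := (nth d h t).2 in
  let hidden (i : 'I_N) :=
    \sum_(hs : (n - L).-tuple JS) \sum_(ha : (n - L).-tuple JA)
      \prod_(k < n - L)
        (let hsk := nth d.1 hs k in let hak := nth d.2 ha k in
         ind (hsk i == s (L + k)%N i) * ind (hak i == a (L + k)%N i)
         * (if k == 0%N :> nat then
              (if L == 0%N then \prod_(j | j != i) ind (hsk j == sI j)
               else \prod_(j | j != i) T (s L.-1 j) (a L.-1 j) (hsk j))
            else \prod_(j | j != i)
                   T (nth d.1 hs k.-1 j) (nth d.2 ha k.-1 j) (hsk j))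
         * pi hsk hak) in
  ind (s 0%N == sI) * (\prod_(t < L) pi (s t) (a t))
  * (\prod_(t < n.-1) JT (s t) (a t) (s t.+1))
  * \prod_i hidden i.

Definition img_prob (L : nat) (h : seq (JS * JA)) : R :=
  if h is d :: _ then img_prob_d d L h else 1.

(* Gamma^img_{t_loss} for a deterministic loss time tl (prefix probabilities) *)
Definition img_loss_prob (tl : nat) (h : seq (JS * JA)) : R :=
  if (tl < size h)%N then img_prob tl h else full_prob h.

(* loss time t_loss = min { t : lambda_t = 0 }, lambda_t = f (s_0 a_0 ... s_{t-1} a_{t-1});
   computed on a prefix h; equals size h if no loss occurs within h *)
Definition loss_time (f : seq (JS * JA) -> bool) (h : seq (JS * JA)) : nat :=
  find (fun t => ~~ f (take t h)) (iota 0 (size h)).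

Definition img_f_prob (f : seq (JS * JA) -> bool) (h : seq (JS * JA)) : R :=
  let L := loss_time f h in
  if (L < size h)%N then img_prob L h else full_prob h.

End MarkovGame.

Definition kl_term (R : realType) (p q : R) : \bar R :=
  if p == 0 then 0%E else if q == 0 then +oo%E else (p * ln (p / q))%:E.

Definition KL_n (R : realType) (X : finType) (n : nat) (P Q : seq X -> R) : \bar R :=
  (\sum_(h : n.-tuple X) kl_term (P h) (Q h))%E.

Definition KL_path (R : realType) (X : finType) (P Q : seq X -> R) : \bar R :=
  ereal_sup (range (fun n => KL_n n P Q)).

(* Main.v *)
Require Import Defs.
From HB Require Import structures.
From mathcomp Require Import all_boot all_order all_algebra.
From mathcomp Require Import all_classical all_reals.
From mathcomp Require Import ereal exp.
From mathcomp Require Import lra ring.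
Import Order.TTheory GRing.Theory Num.Theory.
Local Open Scope ring_scope.
Set Implicit Arguments. Unset Strict Implicit. Unset Printing Implicit Defensive.

Section Generic.
Variable R : realType.

Lemma ln_le_sub1 (x : R) : 0 < x -> ln x <= x - 1.
Proof.
move=> x0; have := expR_ge1Dx (ln x); rewrite lnK ?posrE //.
by rewrite addrC -lerBrDr.
Qed.

Lemma sum_ind_eq (I : finType) (t : I) (F : I -> R) :
  \sum_(o : I) ind R (o == t) * F o = F t.
Proof.
rewrite (bigD1 t) //= eqxx mul1r big1 ?addr0 // => o /negbTE ->.
by rewrite /ind mul0r.
Qed.

Lemma gibbs (I : finType) (w u v : I -> R) :
  (forall a, 0 <= w a) ->
  (forall a, 0 < w a -> 0 < u a /\ 0 < v a) ->
  \sum_a w a * (v a / u a) <= \sum_a w a ->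
  0 <= \sum_a w a * (ln (u a) - ln (v a)).
Proof.
move=> w0 wuv hs.
have H1 : 0 <= \sum_a (w a - w a * (v a / u a)) by rewrite sumrB subr_ge0.
apply: (le_trans H1).
apply: ler_sum => a _.
have [wp|] := ltP 0 (w a); last first.
  move=> wle; have w0' : w a = 0 by apply/le_anti; rewrite wle w0.
  by rewrite w0' !mul0r subrr.
case: (wuv a wp) => up vp.
rewrite -[X in X - _]mulr1 -mulrBr ler_wpM2l ?w0 //.
have := ln_le_sub1 (divr_gt0 vp up).
rewrite ln_div ?posrE // => h.
lra.
Qed.
End Generic.

Section Tuples.
Variable R : realType.

Lemma sum_tuple0 (X : finType) (F : seq X -> R) : \sum_(t : 0.-tuple X) F t = F [::].
Proof. rewrite (big_pred1 [tuple]) // => t /=; apply/esym/eqP/val_inj; by case: t => -[]. Qed.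

Lemma sum_tuple_cons (X : finType) K (F : seq X -> R) :
  \sum_(t : K.+1.-tuple X) F t = \sum_(x : X) \sum_(t : K.-tuple X) F (x :: t).
Proof.
rewrite (pair_bigA _ (fun x (t : K.-tuple X) => F (x :: t))) /=.
rewrite (reindex (fun p : X * K.-tuple X => [tuple of p.1 :: p.2])) //=.
exists (fun t : K.+1.-tuple X => (thead t, [tuple of behead t])) => [[x t]|t] _ /=.
  by rewrite theadE; congr pair; apply: val_inj.
by apply: val_inj => /=; case: t => -[|y t'] //= _; rewrite /thead (tnth_nth y).
Qed.

Lemma sum_tuple_cat (X : finType) m k (F : seq X -> R) :
  \sum_(h : (m + k).-tuple X) F h =
  \sum_(h1 : m.-tuple X) \sum_(h2 : k.-tuple X) F (h1 ++ h2).
Proof.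
elim: m F => [|m IH] F.
  by rewrite (sum_tuple0 (fun h1 => \sum_(h2 : k.-tuple X) F (h1 ++ h2))).
rewrite [LHS](@sum_tuple_cons X (m + k) F).
rewrite (@sum_tuple_cons X m (fun h1 => \sum_(h2 : k.-tuple X) F (h1 ++ h2))).
by apply: eq_bigr => x _; rewrite (IH (fun h => F (x :: h))).
Qed.

Lemma sum_zip (U V : finType) K (F : seq (U * V) -> R) :
  \sum_(g : K.-tuple (U * V)) F g =
  \sum_(hs : K.-tuple U) \sum_(ha : K.-tuple V) F (zip hs ha).
Proof.
elim: K F => [|K IH] F.
  rewrite (@sum_tuple0 _ F) (@sum_tuple0 _ (fun hs => \sum_(ha : 0.-tuple V) F (zip hs ha))).
  by rewrite (@sum_tuple0 _ (fun ha => F (zip [::] ha))).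
rewrite (@sum_tuple_cons _ K F) (@sum_tuple_cons _ K (fun hs => \sum_(ha : K.+1.-tuple V) F (zip hs ha))).
transitivity (\sum_(x : U * V) \sum_(t : K.-tuple (U*V)) F ((x.1, x.2) :: t)).
  by apply: eq_bigr => -[u v].
rewrite -(pair_bigA _ (fun u v => \sum_(t : K.-tuple (U*V)) F ((u, v) :: t))) /=.
apply: eq_bigr => u _.
under [RHS]eq_bigr => hs _ do rewrite (@sum_tuple_cons _ K (fun ha => F (zip (u :: hs) ha))) /=.
rewrite [RHS]exchange_big /=; apply: eq_bigr => v _.
by rewrite (IH (fun t => F ((u, v) :: t))).
Qed.

End Tuples.

Section Distr.
Variable R : realType.
Lemma sum_dffun_prod (I : finType) (S : I -> finType) (F : forall i, S i -> R) :
  \sum_(s : {dffun forall i, S i}) \prod_i F i (s i) = \prod_i \sum_(y : S i) F i y.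
Proof.
rewrite (reindex (@dffun_of_fprod I S)); last exact/onW_bij/dffun_of_fprod_bij.
transitivity (\sum_(t : fprod S) \prod_(i in I) [ffun y => F i y] (t i)).
  by apply: eq_bigr => t _; apply: eq_bigr => i _; rewrite !ffunE.
rewrite big_fprod /=.
rewrite -(bigA_distr_big_dep _ (fun i j => untag 0 ([ffun y => F i y]) j)) /=.
apply: eq_bigr => i _.
rewrite (big_tag (fun i (y : S i) => F i y)).
by apply: eq_bigr => j _; congr untag; apply/funext => y; rewrite ffunE.
Qed.
End Distr.

Unset Implicit Arguments.
Section Main.
Variables (R : realType) (N : nat) (S A : 'I_N -> finType).
Variables (sI : JS S) (T : forall i : 'I_N, S i -> A i -> S i -> R)
  (pi : JS S -> JA A -> R).
Hypothesis hT : forall i (s : S i) (a : A i), is_dist (T i s a).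
Hypothesis hpi : forall s : JS S, is_dist (pi s).

Local Notation X := (JS S * JA A)%type.
Local Notation ind := (ind R).
Implicit Types (nu : forall j : 'I_N, S j -> R).

Definition pf nu (s : JS S) : R := \prod_j nu j (s j).
Definition pfo i nu (s : JS S) : R := \prod_(j | j != i) nu j (s j).
Definition Tf (x : X) : forall j, S j -> R := fun j => T j (x.1 j) (x.2 j).
Definition delta : forall j, S j -> R := fun j y => ind (y == sI j).

Fixpoint chw (w : X -> R) (init : JS S -> R) (tr : X -> JS S -> R) (g : seq X) : R :=
  if g is x :: g' then init x.1 * w x * chw w (tr x) tr g' else 1.

Definition piu (x : X) := pi x.1 x.2.
Definition P2 nu g := chw piu (pf nu) (fun x => pf (Tf x)) g.
Definition TRc nu g := chw (fun _ => 1) (pf nu) (fun x => pf (Tf x)) g.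
Definition Kc i nu g := chw piu (pfo i nu) (fun x => pfo i (Tf x)) g.
Fixpoint OP i (nu : S i -> R) (o : seq (S i * A i)) : R :=
  if o is y :: o' then nu y.1 * OP i (T i y.1 y.2) o' else 1.
Definition own i (x : X) : S i * A i := (x.1 i, x.2 i).
Definition H i nu K (o : seq (S i * A i)) :=
  \sum_(g : K.-tuple X) ind (map (own i) g == o) * Kc i nu g.
Definition cm (s : JS S) i (al : A i) := \sum_(a : JA A) ind (a i == al) * pi s a.

Definition isdf nu := forall j, (forall y, 0 <= nu j y) /\ \sum_y nu j y = 1.

Lemma ind_ge0 b : 0 <= ind b. Proof. by case: b; rewrite /Defs.ind. Qed.
Lemma T_ge0 i s a y : 0 <= T i s a y. Proof. by case: (hT i s a). Qed.
Lemma pi_ge0 s a : 0 <= pi s a. Proof. by case: (hpi s). Qed.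
Lemma isdf_Tf x : isdf (Tf x). Proof. by move=> j; split; [apply: T_ge0|case: (hT j (x.1 j) (x.2 j))]. Qed.
Lemma isdf_delta : isdf delta.
Proof.
move=> j; split; first by move=> y; apply: ind_ge0.
by rewrite /delta (bigD1 (sI j)) //= eqxx big1 ?addr0 // => y /negbTE ->.
Qed.

Lemma pf_ge0 nu s : (forall j y, 0 <= nu j y) -> 0 <= pf nu s.
Proof. by move=> h; apply: prodr_ge0 => j _. Qed.
Lemma pfo_ge0 i nu s : (forall j y, 0 <= nu j y) -> 0 <= pfo i nu s.
Proof. by move=> h; apply: prodr_ge0 => j _. Qed.

Lemma chw_ge0 w init tr g : (forall x, 0 <= w x) -> (forall s, 0 <= init s) ->
  (forall x s, 0 <= tr x s) -> 0 <= chw w init tr g.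
Proof.
move=> hw; elim: g init => [|x g IH] init hi htr //=.
by rewrite !mulr_ge0 // IH.
Qed.

Lemma piu_ge0 x : 0 <= piu x. Proof. exact: pi_ge0. Qed.

Lemma P2_ge0 nu g : isdf nu -> 0 <= P2 nu g.
Proof.
move=> hnu; apply: chw_ge0 => [x|s|x s]; first exact: piu_ge0.
  by apply: pf_ge0 => j y; case: (hnu j).
by apply: pf_ge0 => j y; apply: T_ge0.
Qed.

Lemma Kc_ge0 i nu g : isdf nu -> 0 <= Kc i nu g.
Proof.
move=> hnu; apply: chw_ge0 => [x|s|x s]; first exact: piu_ge0.
  by apply: pfo_ge0 => j y; case: (hnu j).
by apply: pfo_ge0 => j y; apply: T_ge0.
Qed.

Lemma TRc_ge0 nu g : isdf nu -> 0 <= TRc nu g.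
Proof.
move=> hnu; apply: chw_ge0 => [x|s|x s] //.
  by apply: pf_ge0 => j y; case: (hnu j).
by apply: pf_ge0 => j y; apply: T_ge0.
Qed.

Lemma OP_ge0 i (nu : S i -> R) o : (forall y, 0 <= nu y) -> 0 <= OP i nu o.
Proof.
elim: o nu => [|y o IH] nu h //=; rewrite mulr_ge0 // IH // => z; exact: T_ge0.
Qed.

Lemma H_ge0 i nu K o : isdf nu -> 0 <= H i nu K o.
Proof. by move=> h; apply: sumr_ge0 => g _; rewrite mulr_ge0 ?ind_ge0 ?Kc_ge0. Qed.

Lemma pf_split i nu s : pf nu s = nu i (s i) * pfo i nu s.
Proof. by rewrite /pf (bigD1 i). Qed.

Lemma P2_fact i nu g : P2 nu g = OP i (nu i) (map (own i) g) * Kc i nu g.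
Proof.
elim: g nu => [|x g IH] nu /=; first by rewrite mulr1.
rewrite /P2 /= -/(P2 _ _) IH /Kc /= -/(Kc _ _ _) (pf_split i) /=.
rewrite /Tf /=; lra.
Qed.

Lemma Kc_le_H i nu g : isdf nu -> Kc i nu g <= H i nu (size g) (map (own i) g).
Proof.
move=> hnu; rewrite /H (bigD1 (Tuple (eqxx (size g)))) //= eqxx /Defs.ind mul1r.
by rewrite lerDl sumr_ge0 // => t _; rewrite mulr_ge0 ?ind_ge0 ?Kc_ge0.
Qed.

Lemma Gt_Tagged i (G : S i -> R) (y : S i) :
  \sum_(sg : S i) ind (Tagged S y == Tagged S sg) * G sg = G y.
Proof.
under eq_bigr do rewrite eq_Tagged /= eq_sym.
exact: sum_ind_eq.
Qed.

Lemma sum_pf_G i nu (G : S i -> R) : isdf nu ->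
  \sum_(s : JS S) pf nu s * G (s i) = \sum_(y : S i) nu i y * G y.
Proof.
move=> hnu.
pose Gt := fun t : {j : 'I_N & S j} => \sum_(sg : S i) ind (t == Tagged S sg) * G sg.
transitivity (\sum_(s : JS S) \prod_j (nu j (s j) * (if j == i then Gt (Tagged S (s j)) else 1))).
  apply: eq_bigr => s _; rewrite big_split /= -/(pf nu s); congr (_ * _).
  by rewrite (bigD1 i) //= eqxx big1 ?mulr1 /Gt ?Gt_Tagged // => j /negbTE ->.
rewrite (sum_dffun_prod (fun j y => nu j y * (if j == i then Gt (Tagged S y) else 1))).
rewrite (bigD1 i) //= [X in _ * X]big1 ?mulr1.
  by apply: eq_bigr => y _; rewrite eqxx /Gt Gt_Tagged.
move=> j /negbTE ->; under eq_bigr do rewrite mulr1.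
by case: (hnu j).
Qed.

Lemma sum_pf nu : isdf nu -> \sum_(s : JS S) pf nu s = 1.
Proof.
move=> hnu; rewrite /pf (sum_dffun_prod nu) big1 // => j _; by case: (hnu j).
Qed.

Lemma sum_pair (U V : finType) (F : U * V -> R) :
  \sum_(x : U * V) F x = \sum_(u : U) \sum_(v : V) F (u, v).
Proof. by rewrite (pair_bigA _ (fun u v => F (u, v))); apply: eq_bigr => -[]. Qed.

Lemma P2_cons nu x g : P2 nu (x :: g) = pf nu x.1 * piu x * P2 (Tf x) g.
Proof. by []. Qed.
Lemma Kc_cons i nu x g : Kc i nu (x :: g) = pfo i nu x.1 * piu x * Kc i (Tf x) g.
Proof. by []. Qed.
Lemma TRc_cons nu x g : TRc nu (x :: g) = pf nu x.1 * TRc (Tf x) g.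
Proof. by rewrite /TRc /= mulr1. Qed.

Lemma sum_piu (s : JS S) : \sum_(a : JA A) pi s a = 1.
Proof. by case: (hpi s). Qed.

Lemma sum_P2 K nu : isdf nu -> \sum_(g : K.-tuple X) P2 nu g = 1.
Proof.
elim: K nu => [|K IH] nu hnu; first by rewrite (@sum_tuple0 _ _ (P2 nu)).
rewrite (@sum_tuple_cons _ _ K (P2 nu)).
transitivity (\sum_(x : X) pf nu x.1 * piu x).
  apply: eq_bigr => x _; rewrite -[RHS]mulr1 -(IH (Tf x) (isdf_Tf x)) mulr_sumr.
  by apply: eq_bigr => t _; rewrite P2_cons.
rewrite sum_pair -(sum_pf nu hnu); apply: eq_bigr => s _.
by rewrite /piu /= -mulr_sumr sum_piu mulr1.
Qed.

Lemma PART i nu K (Phi : seq (S i * A i) -> R) :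
  \sum_(g : K.-tuple X) P2 nu g * Phi (map (own i) g) =
  \sum_(o : K.-tuple (S i * A i)) OP i (nu i) o * H i nu K o * Phi o.
Proof.
transitivity (\sum_(g : K.-tuple X) \sum_(o : K.-tuple (S i * A i))
   ind (map (own i) g == o) * (OP i (nu i) o * Kc i nu g * Phi o)).
  apply: eq_bigr => g _; rewrite (P2_fact i).
  rewrite -(sum_ind_eq (map_tuple (own i) g) (fun o : K.-tuple _ => OP i (nu i) o * Kc i nu g * Phi o)) /=.
  by apply: eq_bigr => o _; rewrite eq_sym.
rewrite exchange_big /=; apply: eq_bigr => o _.
rewrite /H mulr_sumr mulr_suml; apply: eq_bigr => g _; lra.
Qed.

Lemma ln_prod (I : finType) (F : I -> R) :
  (forall j, 0 < F j) -> ln (\prod_j F j) = \sum_j ln (F j).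
Proof.
move=> hF.
suff [] : 0 < \prod_j F j /\ ln (\prod_j F j) = \sum_j ln (F j) by [].
apply: (big_ind2 (fun y z => 0 < y /\ ln y = z)).
- by rewrite ln1.
- by move=> x1 x2 y1 y2 [h1 e1] [h2 e2]; rewrite mulr_gt0 // lnM ?posrE // e1 e2.
- by move=> j _; split.
Qed.

Lemma mul_pos_r (a b : R) : 0 <= a -> 0 <= b -> 0 < a * b -> 0 < b.
Proof.
move=> a0 b0 ab; rewrite lt_def b0 andbT; apply/eqP => b00.
by move: ab; rewrite b00 mulr0 ltxx.
Qed.
Lemma mul_pos_l (a b : R) : 0 <= a -> 0 <= b -> 0 < a * b -> 0 < a.
Proof. by move=> a0 b0; rewrite mulrC; apply: mul_pos_r. Qed.

Arguments mul_pos_r {a b}.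
Arguments mul_pos_l {a b}.

Lemma split_key (U V : finType) (key : U -> V) (F : U -> R) :
  \sum_(u : U) F u = \sum_(v : V) \sum_(u : U) ind (key u == v) * F u.
Proof.
rewrite exchange_big /=; apply: eq_bigr => u _.
under eq_bigr do rewrite eq_sym.
by rewrite (sum_ind_eq (key u) (fun _ => F u)).
Qed.

Lemma cm_ge (s : JS S) i (a : JA A) : pi s a <= cm s i (a i).
Proof.
rewrite /cm (bigD1 a) //= eqxx /Defs.ind mul1r lerDl.
by apply: sumr_ge0 => b _; rewrite mulr_ge0 ?ind_ge0 ?pi_ge0.
Qed.

Lemma cm_ge0 (s : JS S) i al : 0 <= cm s i al.
Proof. by apply: sumr_ge0 => b _; rewrite mulr_ge0 ?ind_ge0 ?pi_ge0. Qed.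

Lemma sum_cm (s : JS S) i : \sum_(al : A i) cm s i al = 1.
Proof.
by rewrite -(sum_piu s) (split_key _ _ (fun a : JA A => a i) (pi s)).
Qed.

Lemma pi_eq0 (s : JS S) a : ~~ (0 < pi s a) -> pi s a = 0.
Proof. by rewrite -leNgt => h; apply/le_anti; rewrite h pi_ge0. Qed.

Lemma gibbs_pi (s : JS S) :
  0 <= \sum_(a : JA A) pi s a * (ln (pi s a) - \sum_i ln (cm s i (a i))).
Proof.
have -> : \sum_(a : JA A) pi s a * (ln (pi s a) - \sum_i ln (cm s i (a i))) =
   \sum_(a : JA A) pi s a * (ln (pi s a) - ln (\prod_i cm s i (a i))).
  apply: eq_bigr => a _; have [p0|p0] := boolP (0 < pi s a).
    by rewrite ln_prod // => i; apply: lt_le_trans p0 (cm_ge _ _ _).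
  by rewrite pi_eq0 // !mul0r.
apply: gibbs => [a|a p0|]; first exact: pi_ge0.
  by split => //; apply: prodr_gt0 => i _; apply: lt_le_trans p0 (cm_ge _ _ _).
apply: (@le_trans _ _ (\sum_(a : JA A) \prod_i cm s i (a i))).
  apply: ler_sum => a _; have [p0|p0] := boolP (0 < pi s a).
    by rewrite mulrC -mulrA mulVf ?mulr1 // gt_eqF.
  by rewrite pi_eq0 // mul0r; apply: prodr_ge0 => i _; apply: cm_ge0.
rewrite (sum_dffun_prod (fun i al => cm s i al)) sum_piu.
by rewrite big1 // => i _; apply: sum_cm.
Qed.

Lemma G0 K nu : isdf nu -> 0 <= \sum_(x : X) \sum_(t : K.-tuple X)
   P2 nu (x :: t) * (ln (piu x) - \sum_i ln (cm x.1 i (x.2 i))).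
Proof.
move=> hnu.
have -> : \sum_(x : X) \sum_(t : K.-tuple X)
   P2 nu (x :: t) * (ln (piu x) - \sum_i ln (cm x.1 i (x.2 i))) =
   \sum_(s : JS S) pf nu s * \sum_(a : JA A) pi s a * (ln (pi s a) - \sum_i ln (cm s i (a i))).
  rewrite sum_pair; apply: eq_bigr => s _; rewrite mulr_sumr; apply: eq_bigr => a _.
  rewrite -[RHS]mulr1 -(sum_P2 K (Tf (s, a)) (isdf_Tf _)) !mulr_sumr.
  by apply: eq_bigr => t _; rewrite P2_cons /piu /=; ring.
apply: sumr_ge0 => s _; rewrite mulr_ge0 ?gibbs_pi //.
by apply: pf_ge0 => j y; case: (hnu j).
Qed.

Lemma isdf_ge0 nu : isdf nu -> forall j y, 0 <= nu j y.
Proof. by move=> h j y; case: (h j). Qed.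

Lemma pos_cons i nu x t : isdf nu -> 0 < P2 nu (x :: t) ->
  [/\ 0 < piu x, 0 < cm x.1 i (x.2 i),
      0 < H i (Tf x) (size t) (map (own i) t) &
      0 < H i nu (size t).+1 (own i x :: map (own i) t)].
Proof.
move=> hnu hp.
have pf0 : 0 <= pf nu x.1 by apply: pf_ge0; apply: isdf_ge0.
have p2' : 0 <= P2 (Tf x) t by apply: P2_ge0; apply: isdf_Tf.
move: (hp); rewrite P2_cons => hp'.
have hpiu : 0 < piu x by apply: (mul_pos_r pf0 (piu_ge0 _)); apply: (mul_pos_l _ p2' hp'); rewrite mulr_ge0 // piu_ge0.
have hP2' : 0 < P2 (Tf x) t by apply: (mul_pos_r _ p2' hp'); rewrite mulr_ge0 // piu_ge0.
split => //.
- by apply: lt_le_trans hpiu (cm_ge _ _ _).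
- apply: lt_le_trans (Kc_le_H _ _ _ (isdf_Tf x)).
  move: hP2'; rewrite (P2_fact i); apply: mul_pos_r; last by apply: Kc_ge0; apply: isdf_Tf.
  by apply: OP_ge0 => y; apply: T_ge0.
- apply: lt_le_trans (Kc_le_H i nu (x :: t) hnu).
  move: hp; rewrite (P2_fact i); apply: mul_pos_r; last by apply: Kc_ge0.
  by apply: OP_ge0 => y; case: (hnu i).
Qed.

Lemma aux_le (a h n c : R) : 0 <= a -> 0 <= h -> 0 <= n -> 0 <= c ->
  a * (h * (n / (c * h))) <= a * n / c.
Proof.
move=> a0 h0 n0 c0; have [hp|] := boolP (0 < h).
  have [cp|] := boolP (0 < c).
    by rewrite le_eqVlt; apply/orP; left; apply/eqP; field; rewrite !gt_eqF.
  rewrite -leNgt => cle; have -> : c = 0 by apply/le_anti; rewrite cle c0.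
  by rewrite !mul0r !invr0 !mulr0.
rewrite -leNgt => hle; have -> : h = 0 by apply/le_anti; rewrite hle h0.
by rewrite !mul0r mulr0 mulr_ge0 // ?invr_ge0 // mulr_ge0.
Qed.

Lemma Gi_bound i K nu : isdf nu ->
  \sum_(x : X) \sum_(t : K.-tuple X) P2 nu (x :: t) *
     (H i nu K.+1 (own i x :: map (own i) t) / (cm x.1 i (x.2 i) * H i (Tf x) K (map (own i) t)))
  <= \sum_(x : X) \sum_(t : K.-tuple X) P2 nu (x :: t).
Proof.
move=> hnu.
pose Psi (y : S i * A i) := \sum_(o : K.-tuple (S i * A i)) OP i (T i y.1 y.2) o * H i nu K.+1 (y :: o).
have Psi0 y : 0 <= Psi y.
  apply: sumr_ge0 => o _; rewrite mulr_ge0 ?H_ge0 //.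
  by apply: OP_ge0 => z; apply: T_ge0.
apply: (@le_trans _ _ (\sum_(x : X) pf nu x.1 * piu x / cm x.1 i (x.2 i) * Psi (own i x))).
  apply: ler_sum => x _.
  have pp0 : 0 <= pf nu x.1 * piu x by rewrite mulr_ge0 ?piu_ge0 // pf_ge0 //; apply: isdf_ge0.
  have -> : \sum_(t : K.-tuple X) P2 nu (x :: t) *
     (H i nu K.+1 (own i x :: map (own i) t) / (cm x.1 i (x.2 i) * H i (Tf x) K (map (own i) t)))
   = (pf nu x.1 * piu x * \sum_(t : K.-tuple X) P2 (Tf x) t *
     (fun o => H i nu K.+1 (own i x :: o) / (cm x.1 i (x.2 i) * H i (Tf x) K o)) (map (own i) t)).
    by rewrite mulr_sumr; apply: eq_bigr => t _; rewrite P2_cons /=; ring.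
  rewrite (PART i (Tf x) K (fun o => H i nu K.+1 (own i x :: o) / (cm x.1 i (x.2 i) * H i (Tf x) K o))).
  rewrite [X in _ <= X](_ : _ = pf nu x.1 * piu x * (Psi (own i x) / cm x.1 i (x.2 i))); last by ring.
  rewrite ler_wpM2l // /Psi mulr_suml; apply: ler_sum => o _.
  rewrite -mulrA; apply: aux_le.
  - by apply: OP_ge0 => z; apply: T_ge0.
  - by apply: H_ge0; apply: isdf_Tf.
  - by apply: H_ge0.
  - exact: cm_ge0.
rewrite sum_pair /=.
apply: (@le_trans _ _ (\sum_(s : JS S) pf nu s * \sum_(al : A i) Psi (s i, al))).
  apply: ler_sum => s _.
  rewrite (eq_bigr (fun a => pf nu s * (pi s a / cm s i (a i) * Psi (s i, a i)))); last first.
    by move=> a _; rewrite /piu /own /=; ring.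
  have pfs : 0 <= pf nu s by apply: pf_ge0; apply: isdf_ge0.
  rewrite -mulr_sumr ler_wpM2l //.
  rewrite (split_key _ _ (fun a : JA A => a i)); apply: ler_sum => al _.
  have -> : \sum_(a : JA A) ind (a i == al) * (pi s a / cm s i (a i) * Psi (s i, a i)) =
     cm s i al / cm s i al * Psi (s i, al).
    rewrite /cm !mulr_suml; apply: eq_bigr => a _.
    by case: eqP => [<-|_]; rewrite /Defs.ind ?mul1r ?mul0r.
  have [hc|hc] := boolP (0 < cm s i al).
    by rewrite divff ?gt_eqF ?mul1r.
  have -> : cm s i al = 0 by apply/le_anti; rewrite cm_ge0 andbT leNgt.
  by rewrite mul0r mul0r.
rewrite (sum_pf_G i nu (fun sg => \sum_(al : A i) Psi (sg, al)) hnu).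
rewrite le_eqVlt; apply/orP; left; apply/eqP.
transitivity (\sum_(g : K.+1.-tuple X) P2 nu g * (fun _ => 1) (map (own i) g)).
  rewrite (PART i nu K.+1 (fun _ => 1)) (@sum_tuple_cons _ _ K (fun o => OP i (nu i) o * H i nu K.+1 o * 1)).
  rewrite sum_pair; apply: eq_bigr => sg _; rewrite mulr_sumr; apply: eq_bigr => al _.
  by rewrite /Psi mulr_sumr; apply: eq_bigr => o _ /=; ring.
rewrite (@sum_tuple_cons _ _ K (fun g => P2 nu g * 1)).
by apply: eq_bigr => x _; apply: eq_bigr => t _; rewrite mulr1.
Qed.

Lemma Gi i K nu : isdf nu -> 0 <= \sum_(x : X) \sum_(t : K.-tuple X) P2 nu (x :: t) *
  (ln (cm x.1 i (x.2 i)) + ln (H i (Tf x) K (map (own i) t))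
    - ln (H i nu K.+1 (own i x :: map (own i) t))).
Proof.
move=> hnu.
pose u (p : X * K.-tuple X) := cm p.1.1 i (p.1.2 i) * H i (Tf p.1) K (map (own i) p.2).
pose v (p : X * K.-tuple X) := H i nu K.+1 (own i p.1 :: map (own i) p.2).
pose w (p : X * K.-tuple X) := P2 nu (p.1 :: p.2).
have hpos p : 0 < w p -> 0 < u p /\ 0 < v p.
  move=> wp; case: (pos_cons i nu p.1 p.2 hnu wp); rewrite size_tuple => _ h1 h2 h3.
  by split => //; rewrite /u mulr_gt0.
rewrite (pair_bigA _ (fun x (t : K.-tuple X) => P2 nu (x :: t) *
  (ln (cm x.1 i (x.2 i)) + ln (H i (Tf x) K (map (own i) t))
    - ln (H i nu K.+1 (own i x :: map (own i) t))))) /=.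
rewrite (eq_bigr (fun p => w p * (ln (u p) - ln (v p)))); last first.
  move=> p _; have [wp|wp] := boolP (0 < w p).
    case: (pos_cons i nu p.1 p.2 hnu wp); rewrite size_tuple => _ h1 h2 h3.
    by rewrite /u /w /v lnM ?posrE.
  rewrite -leNgt /w in wp.
  have e : P2 nu (p.1 :: p.2) = 0 by apply/le_anti; rewrite wp P2_ge0.
  by rewrite /w e !mul0r.
apply: gibbs => [p|p|]; first by apply: P2_ge0.
  exact: hpos.
have := Gi_bound i K nu hnu.
rewrite (pair_bigA _ (fun x (t : K.-tuple X) => P2 nu (x :: t) *
     (H i nu K.+1 (own i x :: map (own i) t) / (cm x.1 i (x.2 i) * H i (Tf x) K (map (own i) t))))).
by rewrite (pair_bigA _ (fun x (t : K.-tuple X) => P2 nu (x :: t))).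
Qed.

Definition Dl nu (g : seq X) : R :=
  if g is x :: g' then ln (piu x) + \sum_i ln (H i (Tf x) (size g') (map (own i) g'))
    - \sum_i ln (H i nu (size g').+1 (map (own i) g)) else 0.

Lemma STEP2 K nu : isdf nu -> 0 <= \sum_(g : K.+1.-tuple X) P2 nu g * Dl nu g.
Proof.
move=> hnu.
rewrite (@sum_tuple_cons _ _ K (fun g => P2 nu g * Dl nu g)).
have -> : \sum_(x : X) \sum_(t : K.-tuple X) P2 nu (x :: t) * Dl nu (x :: t) =
  \sum_(x : X) \sum_(t : K.-tuple X) (P2 nu (x :: t) * (ln (piu x) - \sum_i ln (cm x.1 i (x.2 i)))
   + \sum_i P2 nu (x :: t) * (ln (cm x.1 i (x.2 i)) + ln (H i (Tf x) K (map (own i) t))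
    - ln (H i nu K.+1 (own i x :: map (own i) t)))).
  apply: eq_bigr => x _; apply: eq_bigr => t _.
  rewrite /Dl size_tuple -mulr_sumr -mulrDr; congr (_ * _).
  rewrite /= sumrB big_split /=; lra.
rewrite (eq_bigr _ (fun x _ => big_split _ _ _ _ _)) big_split /=.
apply: addr_ge0; first exact: G0.
rewrite (eq_bigr _ (fun x _ => exchange_big _ _ _ _ _ _)) /= exchange_big /=.
by apply: sumr_ge0 => i _; apply: Gi.
Qed.

Fixpoint chp (w : nat -> X -> R) (init : JS S -> R) (tr : X -> JS S -> R) (k : nat) (g : seq X) : R :=
  if g is x :: g' then init x.1 * w k x * chp w (tr x) tr k.+1 g' else 1.

Lemma chp_nth w init tr k g d : chp w init tr k g =
  (if g is x :: _ then init x.1 else 1) * \prod_(t < size g) w (k + t)%N (nth d g t)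
  * \prod_(t < (size g).-1) tr (nth d g t) (nth d g t.+1).1.
Proof.
elim: g init k => [|x g IH] init k /=; first by rewrite !big_ord0 !mulr1.
rewrite IH big_ord_recl /= addn0.
have -> : \prod_(i < size g) w (k + bump 0 i)%N (nth d g (0 + i)) =
   \prod_(t < size g) w (k.+1 + t)%N (nth d g t).
  by apply: eq_bigr => t _; rewrite /bump /= add0n addnS.
case: g IH => [|y g] IH /=; first by rewrite !big_ord0 !mulr1.
rewrite [X in _ = _ * X]big_ord_recl /=; ring.
Qed.

Lemma chp_cat w init tr k h1 h2 : chp w init tr k (h1 ++ h2) =
  chp w init tr k h1 * chp w (if h1 is x :: h1' then tr (last x h1') else init) tr (k + size h1) h2.
Proof.
elim: h1 init k => [|x h1 IH] init k /=; first by rewrite mul1r addn0.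
rewrite IH addSnnS; case: h1 IH => [|y h1] IH /=; ring.
Qed.

Lemma chp_chw w v init tr k g : (forall t x, (t < size g)%N -> w (k + t)%N x = v x) ->
  chp w init tr k g = chw v init tr g.
Proof.
elim: g init k => [|x g IH] init k //= hw.
rewrite -(addn0 k) hw // addn0 (IH _ k.+1) // => t y ht.
by rewrite addSnnS hw.
Qed.

Lemma pf_delta s : pf delta s = ind (s == sI).
Proof.
rewrite /pf /delta; have [->|ne] := eqVneq s sI.
  by rewrite big1 // => j _; rewrite eqxx.
have [j hj] : exists j, s j != sI j.
  apply/existsP; apply: contraR ne => /existsPn h; apply/eqP/ffunP => j.
  by apply/eqP; move: (h j); rewrite negbK.
by rewrite (bigD1 j) //= (negbTE hj) /Defs.ind mul0r.
Qed.

Definition nuof (h1 : seq X) := if h1 is x :: h1' then Tf (last x h1') else delta.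

Lemma full_P2 h : full_prob sI T pi h = P2 delta h.
Proof.
case: h => [|d h'] //=; rewrite /full_prob_d /P2.
rewrite -(chp_chw (fun _ => piu) piu _ _ 0) // (chp_nth _ _ _ _ _ d) /= pf_delta.
by [].
Qed.

Definition wL (L : nat) (t : nat) (x : X) : R := if (t < L)%N then piu x else 1.

Lemma B2a d h' L : (L <= size (d :: h'))%N ->
  ind ((nth d (d :: h') 0).1 == sI) * (\prod_(t < L) pi (nth d (d :: h') t).1 (nth d (d :: h') t).2)
  * \prod_(t < (size (d :: h')).-1) JT T (nth d (d :: h') t).1 (nth d (d :: h') t).2 (nth d (d :: h') t.+1).1
  = P2 delta (take L (d :: h')) * TRc (nuof (take L (d :: h'))) (drop L (d :: h')).
Proof.
set h := d :: h' => hL.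
have -> : \prod_(t < L) pi (nth d h t).1 (nth d h t).2 = \prod_(t < size h) wL L t (nth d h t).
  rewrite (big_ord_widen _ (fun t => pi (nth d h t).1 (nth d h t).2) hL) big_mkcond /=.
  by apply: eq_bigr => t _; rewrite /wL.
have -> : ind ((nth d h 0).1 == sI) = pf delta (if h is x :: _ then x.1 else sI).
  by rewrite pf_delta.
transitivity (chp (wL L) (pf delta) (fun x => pf (Tf x)) 0 h).
  by rewrite (chp_nth _ _ _ _ _ d).
rewrite -{1}(cat_take_drop L h) chp_cat add0n size_takel //.
congr (_ * _).
  apply: chp_chw => t x; rewrite size_takel // => ht; by rewrite /wL add0n ht.
rewrite /TRc -(chp_chw (wL L) _ _ _ L); last first.
  by move=> t x _; rewrite /wL ltnNge leq_addr.
by case: (take L h).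
Qed.

Lemma prod_ind (I : finType) (P : pred I) : \prod_k ind (P k) = ind [forall k, P k].
Proof.
have [h|/forallPn [k hk]] := boolP [forall k, P k].
  by rewrite big1 // => k _; move/forallP: h => ->.
by rewrite (bigD1 k) //= (negbTE hk) /Defs.ind mul0r.
Qed.

Lemma indM (b c : bool) : ind b * ind c = ind (b && c).
Proof. by case: b; case: c; rewrite /Defs.ind ?mul1r ?mul0r. Qed.

Lemma seq_eq_nth (U : eqType) (u v : seq U) K x0 : size u = K -> size v = K ->
  (u == v) = [forall k : 'I_K, nth x0 u k == nth x0 v k].
Proof.
move=> su sv; apply/eqP/forallP => [->|h] // .
apply: (@eq_from_nth _ x0); first by rewrite su sv.
by move=> k; rewrite su => hk; apply/eqP/(h (Ordinal hk)).
Qed.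

Lemma chw_nth w init tr g d : chw w init tr g =
  (if g is x :: _ then init x.1 else 1) * \prod_(t < size g) w (nth d g t)
  * \prod_(t < (size g).-1) tr (nth d g t) (nth d g t.+1).1.
Proof. by rewrite -(chp_chw (fun _ => w) w _ _ 0) // (chp_nth _ _ _ _ _ d). Qed.

Lemma hidden_H i K (d : X) (o : seq (S i * A i)) (c0 : JS S -> R) : size o = K ->
  \sum_(hs : K.-tuple (JS S)) \sum_(ha : K.-tuple (JA A)) \prod_(k < K)
    (ind (nth d.1 hs k i == (nth (d.1 i, d.2 i) o k).1) * ind (nth d.2 ha k i == (nth (d.1 i, d.2 i) o k).2)
     * (if k == 0%N :> nat then c0 (nth d.1 hs k)
        else pfo i (Tf (nth d.1 hs k.-1, nth d.2 ha k.-1)) (nth d.1 hs k))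
     * pi (nth d.1 hs k) (nth d.2 ha k))
  = \sum_(g : K.-tuple X) ind (map (own i) g == o) * chw piu c0 (fun x => pfo i (Tf x)) g.
Proof.
move=> so.
rewrite (sum_zip K (fun g => ind (map (own i) g == o) * chw piu c0 (fun x => pfo i (Tf x)) g)).
apply: eq_bigr => hs _; apply: eq_bigr => ha _.
have sz : size (zip hs ha) = K by rewrite size1_zip !size_tuple.
have nz k : (k < K)%N -> nth d (zip hs ha) k = (nth d.1 hs k, nth d.2 ha k).
  by move=> hk; rewrite -nth_zip ?size_tuple //; case: d.
rewrite (chw_nth _ _ _ _ d) sz.
rewrite big_split big_split /=.
under eq_bigr do rewrite indM.
rewrite prod_ind.
rewrite (seq_eq_nth _ _ _ K (own i d)) ?size_map //.
have -> : [forall k : 'I_K, nth (own i d) (map (own i) (zip hs ha)) k == nth (own i d) o k] =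
  [forall k : 'I_K, (nth d.1 hs k i == (nth (d.1 i, d.2 i) o k).1) &&
     (nth d.2 ha k i == (nth (d.1 i, d.2 i) o k).2)].
  apply: eq_forallb => k.
  by rewrite (nth_map d) ?sz ?ltn_ord // nz ?ltn_ord // /own /=.
have -> : \prod_(k < K) pi (nth d.1 hs k) (nth d.2 ha k) = \prod_(t < K) piu (nth d (zip hs ha) t).
  by apply: eq_bigr => k _; rewrite nz ?ltn_ord.
case: K hs ha so sz nz => [|K] hs ha so sz nz.
  have -> : zip hs ha = [::] by apply/size0nil.
  by rewrite !big_ord0 /= !mulr1.
set Pp := \prod_(t < K.+1) piu (nth d (zip hs ha) t).
rewrite big_ord_recl /=.
have -> : \prod_(k < K) (if bump 0 k == 0%N :> nat then c0 (nth d.1 hs (bump 0 k))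
     else pfo i (Tf (nth d.1 hs (bump 0 k).-1, nth d.2 ha (bump 0 k).-1)) (nth d.1 hs (bump 0 k)))
   = \prod_(t < K) pfo i (Tf (nth d (zip hs ha) t)) (nth d (zip hs ha) t.+1).1.
  apply: eq_bigr => k _; rewrite /bump /= add1n.
  by rewrite (nz k (ltnW (ltn_ord k))) (nz k.+1 (ltn_ord k)) add0n.
have -> : (match zip hs ha with [::] => 1 | x :: _ => c0 x.1 end) = c0 (nth d.1 hs 0).
  have h0 := nz 0%N isT.
  case ez : (zip hs ha) h0 => [|x g] h0; first by rewrite ez in sz.
  by rewrite /= in h0; rewrite h0.
rewrite -!mulrA; congr (_ * (_ * _)); exact: mulrC.
Qed.

Definition Img (m : nat) (h : seq X) : R :=
  P2 delta (take m h) * TRc (nuof (take m h)) (drop m h)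
  * \prod_i H i (nuof (take m h)) (size h - m) (map (own i) (drop m h)).

Lemma last_take (x : X) s n : (n <= size s)%N -> last x (take n s) = nth x (x :: s) n.
Proof.
elim: s x n => [|y s IH] x [|n] //= hn.
rewrite IH //; apply: set_nth_default; by [].
Qed.

Lemma img_Img m h : (m <= size h)%N -> img_prob sI T pi m h = Img m h.
Proof.
case: h => [|d h'] hm.
  move: hm; rewrite leqn0 => /eqP ->.
  rewrite /Img /= /P2 /TRc /= !mul1r big1 // => i _.
  by rewrite /H (sum_tuple0 (fun g => ind (map (own i) g == [::]) * Kc i delta g)) /= mul1r.
rewrite /img_prob /img_prob_d; cbv beta zeta.
rewrite B2a // /Img; congr (_ * _).
apply: eq_bigr => i _.
rewrite /H -(hidden_H i _ d (map (own i) (drop m (d :: h'))) (pfo i (nuof (take m (d :: h'))))); last first.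
  by rewrite size_map size_drop.
apply: eq_bigr => hs _; apply: eq_bigr => ha _; apply: eq_bigr => k _.
have hk : (k < size (drop m (d :: h')))%N by rewrite size_drop ltn_ord.
rewrite (nth_map d) // nth_drop /own /=.
congr (_ * _ * _); case: (k == 0%N :> nat) => //.
have [m0|mn0] := eqVneq m 0%N.
  have e : take m (d :: h') = [::] by rewrite m0.
  by rewrite e.
have e : take m (d :: h') = d :: take m.-1 h' by case: (m) mn0.
rewrite e.
by rewrite /= last_take // -ltnS prednK ?lt0n.
Qed.

Lemma isdf_nuof h1 : isdf (nuof h1).
Proof. by case: h1 => [|x h1]; [exact: isdf_delta | exact: isdf_Tf]. Qed.

Lemma Img_full h : Img (size h) h = P2 delta h.
Proof.
rewrite /Img take_size drop_size subnn /TRc /= mulr1 big1 ?mulr1 // => i _.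
by rewrite /H (sum_tuple0 (fun g => ind (map (own i) g == [::]) * Kc i _ g)) /= mul1r.
Qed.

Lemma P2_cat h1 h2 : P2 delta (h1 ++ h2) = P2 delta h1 * P2 (nuof h1) h2.
Proof.
rewrite /P2 -!(chp_chw (fun _ => piu) piu _ _ 0) // chp_cat.
congr (_ * _); rewrite add0n (chp_chw (fun _ => piu) piu) //.
rewrite -(chp_chw (fun _ => piu) piu _ _ 0) //.
by case: h1.
Qed.

Lemma TRc_pos nu g : isdf nu -> 0 < P2 nu g -> 0 < TRc nu g.
Proof.
elim: g nu => [|x g IH] nu hnu; first by rewrite /TRc /= ltr01.
rewrite P2_cons TRc_cons => hp.
have pf0 : 0 <= pf nu x.1 by apply: pf_ge0; apply: isdf_ge0.
have p2' : 0 <= P2 (Tf x) g by apply: P2_ge0; apply: isdf_Tf.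
have h1 : 0 < pf nu x.1 * piu x by apply: (mul_pos_l _ p2' hp); rewrite mulr_ge0 ?piu_ge0.
rewrite mulr_gt0 //; first by apply: (mul_pos_l pf0 (piu_ge0 x) h1).
by apply: IH; [apply: isdf_Tf | apply: (mul_pos_r _ p2' hp); rewrite mulr_ge0 ?piu_ge0].
Qed.

Lemma lnM2 (a b : R) : 0 < a -> 0 < b -> ln (a * b) = ln a + ln b.
Proof. by move=> a0 b0; rewrite lnM ?posrE. Qed.

Lemma nuof_rcons h1 x : nuof (rcons h1 x) = Tf x.
Proof. by case: h1 => [|y h1] //=; rewrite last_rcons. Qed.

Lemma Img_pos m h : (m <= size h)%N -> 0 < P2 delta h -> 0 < Img m h.
Proof.
move=> hm hp.
have hp' : 0 < P2 delta (take m h) * P2 (nuof (take m h)) (drop m h) by rewrite -P2_cat cat_take_drop.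
have a0 : 0 <= P2 delta (take m h) by apply: P2_ge0; apply: isdf_delta.
have b0 : 0 <= P2 (nuof (take m h)) (drop m h) by apply: P2_ge0; apply: isdf_nuof.
have pa := mul_pos_l a0 b0 hp'.
have pb := mul_pos_r a0 b0 hp'.
have t0 : 0 < TRc (nuof (take m h)) (drop m h) by apply: TRc_pos => //; apply: isdf_nuof.
rewrite /Img !mulr_gt0 //.
apply: prodr_gt0 => i _.
apply: lt_le_trans (_ : Kc i (nuof (take m h)) (drop m h) <= _).
  move: pb; rewrite (P2_fact i); apply: mul_pos_r; last by apply: Kc_ge0; apply: isdf_nuof.
  by apply: OP_ge0; apply: isdf_ge0; apply: isdf_nuof.
rewrite -size_drop; apply: Kc_le_H; exact: isdf_nuof.
Qed.

Lemma prod_pos_each (I : finType) (F : I -> R) : 0 < \prod_j F j -> (forall j, 0 <= F j) ->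
  forall j, 0 < F j.
Proof.
move=> hp h0 j; rewrite lt_def h0 andbT; apply/eqP => e.
by move: hp; rewrite (bigD1 j) //= e mul0r ltxx.
Qed.

Lemma Img_step m h : (m < size h)%N -> 0 < P2 delta h ->
  ln (Img m.+1 h) - ln (Img m h) = Dl (nuof (take m h)) (drop m h).
Proof.
move=> hm hp.
case: h hm hp => [|d h0] // hm hp.
set h := d :: h0.
set nu := nuof (take m h).
set x := nth d h m.
set g := drop m.+1 h.
have ed : drop m h = x :: g by rewrite /x /g -drop_nth.
have et : take m.+1 h = rcons (take m h) x by rewrite /x -take_nth.
have hnu : isdf nu by apply: isdf_nuof.
have hp' : 0 < P2 delta (take m h) * P2 nu (x :: g) by rewrite -ed -P2_cat cat_take_drop.
have a0 : 0 <= P2 delta (take m h) by apply: P2_ge0; apply: isdf_delta.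
have b0 : 0 <= P2 nu (x :: g) by apply: P2_ge0.
have pa := mul_pos_l a0 b0 hp'.
have pb := mul_pos_r a0 b0 hp'.
have hH i : 0 < H i (Tf x) (size g) (map (own i) g) /\ 0 < H i nu (size g).+1 (own i x :: map (own i) g).
  by case: (pos_cons i nu x g hnu pb).
move: (pb); rewrite P2_cons => pb'.
have pf0 : 0 <= pf nu x.1 by apply: pf_ge0; apply: isdf_ge0.
have p2' : 0 <= P2 (Tf x) g by apply: P2_ge0; apply: isdf_Tf.
have h1 : 0 < pf nu x.1 * piu x by apply: (mul_pos_l _ p2' pb'); rewrite mulr_ge0 ?piu_ge0.
have hpf : 0 < pf nu x.1 by apply: (mul_pos_l pf0 (piu_ge0 x) h1).
have hpiu : 0 < piu x by apply: (mul_pos_r pf0 (piu_ge0 x) h1).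
have hP2' : 0 < P2 (Tf x) g by apply: (mul_pos_r _ p2' pb'); rewrite mulr_ge0 ?piu_ge0.
have htr : 0 < TRc (Tf x) g by apply: TRc_pos => //; apply: isdf_Tf.
have sg : size g = (size h - m.+1)%N by rewrite size_drop.
have sg' : ((size g).+1 = size h - m)%N by rewrite sg subnSK.
rewrite /Img et ed nuof_rcons -/g -cats1 P2_cat -/nu TRc_cons.
rewrite /P2 /= -/(P2 nu [::]) /P2 /= mulr1 -/(P2 delta (take m h)).
rewrite -sg -sg' /Dl.
rewrite !lnM2 ?mulr_gt0 //; try (apply: prodr_gt0 => i _; by case: (hH i)).
rewrite !ln_prod; try (move=> i; by case: (hH i)).
  rewrite /=; lra.
move=> j; apply: (prod_pos_each _ (fun j => nu j (x.1 j)) hpf) => k; by case: (hnu k).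
Qed.

Lemma loss_lt (f : seq X -> bool) m h : (m < size h)%N ->
  (m < loss_time f h)%N = all (fun t => f (take t h)) (iota 0 m.+1).
Proof.
move=> hm; rewrite /loss_time.
have -> : size h = (m.+1 + (size h - m.+1))%N by rewrite subnKC.
rewrite iotaD find_cat size_iota.
have -> : all (fun t => f (take t h)) (iota 0 m.+1) = ~~ has (fun t => ~~ f (take t h)) (iota 0 m.+1).
  by rewrite -all_predC; apply: eq_all => t /=; rewrite negbK.
case: ifP => hh; last by rewrite ltn_addr.
by apply/negbTE; rewrite -leqNgt -ltnS; move: hh; rewrite has_find size_iota.
Qed.

Lemma step_sum (f : seq X -> bool) n m : (m < n)%N ->
  0 <= \sum_(h : n.-tuple X) P2 delta h * (ind (m < loss_time f h)%N * Dl (nuof (take m h)) (drop m h)).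
Proof.
move=> hmn.
have [k ek] : exists k, n = (m + k.+1)%N by exists (n - m.+1)%N; rewrite addnS -addSn subnKC.
move: hmn; rewrite ek => hmn; clear ek.
rewrite (sum_tuple_cat m k.+1 (fun h => P2 delta h * (ind (m < loss_time f h)%N * Dl (nuof (take m h)) (drop m h)))).
apply: sumr_ge0 => h1 _.
have e1 (h2 : k.+1.-tuple X) : P2 delta (h1 ++ h2) * (ind (m < loss_time f (h1 ++ h2))%N
     * Dl (nuof (take m (h1 ++ h2))) (drop m (h1 ++ h2))) =
   (P2 delta h1 * ind (all (fun t => f (take t h1)) (iota 0 m.+1))) * (P2 (nuof h1) h2 * Dl (nuof h1) h2).
  have sh1 : size h1 = m by rewrite size_tuple.
  rewrite P2_cat (take_size_cat _ sh1) (drop_size_cat _ sh1) loss_lt; last first.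
    by rewrite size_cat sh1 size_tuple -addSnnS leq_addr.
  have -> : all (fun t => f (take t (h1 ++ h2))) (iota 0 m.+1) = all (fun t => f (take t h1)) (iota 0 m.+1).
    apply: eq_in_all => t; rewrite mem_iota add0n ltnS => /andP [_ ht].
    rewrite take_cat sh1; case: ltnP => // htm.
    have -> : (t - m)%N = 0%N by apply/eqP; rewrite subn_eq0.
    by rewrite take0 cats0 take_oversize // sh1.
  ring.
rewrite (eq_bigr _ (fun h2 _ => e1 h2)) -mulr_sumr mulr_ge0 //.
  by rewrite mulr_ge0 ?ind_ge0 // P2_ge0 //; apply: isdf_delta.
by apply: STEP2; apply: isdf_nuof.
Qed.

Lemma loss_le (f : seq X -> bool) h : (loss_time f h <= size h)%N.
Proof. by rewrite /loss_time -[X in (_ <= X)%N](size_iota 0) find_size. Qed.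

Lemma imgf_Img (f : seq X -> bool) h : img_f_prob sI T pi f h = Img (loss_time f h) h.
Proof.
rewrite /img_f_prob; case: ltnP => hL; first by rewrite img_Img // ltnW.
have e : loss_time f h = size h by apply/eqP; rewrite eqn_leq hL loss_le.
by rewrite e Img_full full_P2.
Qed.

Lemma img0_Img h : (0 < size h)%N -> img_loss_prob sI T pi 0 h = Img 0 h.
Proof. by move=> hn; rewrite /img_loss_prob hn img_Img. Qed.

Lemma tele (f : seq X -> bool) h : 0 < P2 delta h ->
  ln (Img (loss_time f h) h) - ln (Img 0 h) =
  \sum_(m < size h) ind (m < loss_time f h)%N * Dl (nuof (take m h)) (drop m h).
Proof.
move=> hp; have hL := loss_le f h; set L := loss_time f h in hL *.
have -> : \sum_(m < size h) ind (m < L)%N * Dl (nuof (take m h)) (drop m h) =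
    \sum_(m < L) Dl (nuof (take m h)) (drop m h).
  rewrite (big_ord_widen (size h) (fun m => Dl (nuof (take m h)) (drop m h)) hL) [RHS]big_mkcond /=.
  by apply: eq_bigr => m _; rewrite /Defs.ind; case: ifP; rewrite ?mul1r ?mul0r.
have te := telescope_sumr (fun m => ln (Img m h)) (leq0n L); rewrite /= in te.
rewrite -te big_mkord.
apply: eq_bigr => m _; rewrite Img_step //.
by apply: leq_trans hL.
Qed.

Lemma KL_fin n (P Q : seq X -> R) : (forall h, 0 <= P h) -> (forall h, 0 < P h -> 0 < Q h) ->
  KL_n n P Q = (\sum_(h : n.-tuple X) P h * (ln (P h) - ln (Q h)))%:E.
Proof.
move=> hP hQ; rewrite /KL_n -sumEFin; apply: eq_bigr => h _; rewrite /kl_term.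
case: eqP => [->|p0]; first by rewrite mul0r.
have pp : 0 < P h by rewrite lt_def hP andbT; apply/eqP.
by rewrite gt_eqF ?hQ // ln_div ?posrE ?hQ.
Qed.

Lemma main_n (f : seq X -> bool) n : (0 < n)%N ->
  (KL_n n (full_prob sI T pi) (img_f_prob sI T pi f)
   <= KL_n n (full_prob sI T pi) (img_loss_prob sI T pi 0))%E.
Proof.
move=> n0.
have hP h : 0 <= full_prob sI T pi h by rewrite full_P2 P2_ge0 //; apply: isdf_delta.
rewrite (KL_fin n _ (img_f_prob sI T pi f)) //; last first.
  by move=> h; rewrite full_P2 imgf_Img => hp; apply: Img_pos => //; apply: loss_le.
rewrite (KL_fin n _ (img_loss_prob sI T pi 0)) //; last first.
  move=> h; rewrite full_P2 /img_loss_prob; case: ifP => hs hp.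
    by rewrite img_Img //; apply: Img_pos.
  by rewrite full_P2.
rewrite lee_fin -subr_ge0 -sumrB.
have -> : \sum_(h : n.-tuple X) (full_prob sI T pi h * (ln (full_prob sI T pi h) - ln (img_loss_prob sI T pi 0 h)) -
     full_prob sI T pi h * (ln (full_prob sI T pi h) - ln (img_f_prob sI T pi f h))) =
   \sum_(h : n.-tuple X) \sum_(m < n) P2 delta h * (ind (m < loss_time f h)%N * Dl (nuof (take m h)) (drop m h)).
  apply: eq_bigr => h _.
  have sh : size h = n by rewrite size_tuple.
  rewrite full_P2 imgf_Img img0_Img ?sh // -mulr_sumr.
  have [hp|hp] := boolP (0 < P2 delta h).
    have e : \sum_(m < n) ind (m < loss_time f h)%N * Dl (nuof (take m h)) (drop m h) =
       \sum_(m < size h) ind (m < loss_time f h)%N * Dl (nuof (take m h)) (drop m h) by rewrite sh.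
    by rewrite e -tele //; ring.
  have -> : P2 delta h = 0 by apply/le_anti; rewrite leNgt hp P2_ge0 //; apply: isdf_delta.
  by rewrite !mul0r subrr.
rewrite exchange_big /=; apply: sumr_ge0 => m _.
exact: step_sum.
Qed.

End Main.

Theorem lemma3 (R : realType) (N : nat) (S A : 'I_N -> finType)
  (sI : JS S) (T : forall i : 'I_N, S i -> A i -> S i -> R)
  (pi : JS S -> JA A -> R) (f : seq (JS S * JA A) -> bool) :
  (forall i (s : S i) (a : A i), is_dist (T i s a)) ->
  (forall s : JS S, is_dist (pi s)) ->
  (KL_path (full_prob sI T pi) (img_f_prob sI T pi f)
    <= KL_path (full_prob sI T pi) (img_loss_prob sI T pi 0))%E.
Proof.
move=> hT hpi.
apply: ge_ereal_sup => _ [n _ <-].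
have key : (KL_n n (full_prob sI T pi) (img_f_prob sI T pi f)
   <= KL_n n (full_prob sI T pi) (img_loss_prob sI T pi 0))%E.
  case: n => [|n]; last by apply: (main_n R N S A sI T pi hT hpi f n.+1).
  rewrite le_eqVlt; apply/orP; left; apply/eqP.
  rewrite /KL_n; apply: eq_bigr => h _.
  have -> : tval h = [::] by case: h => -[].
  by [].
apply: (le_trans key); apply: ereal_sup_ubound; by exists n.
Qed.
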